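(* The functor $G:\mathbf{cMet}_1\to{\rm PER}(\mathbf U)$, $G(X,d)=(X,d)$, $G(f)=[(x,y)\mapsto d(f(x),y)]$, preserves finite products.
   Context: $\mathbf{cMet}_1$: complete metric spaces with all distances $\le 1$ and uniformly continuous maps; its binary product is the set-theoretic product with the max-metric, its terminal object a one-point space. For functions $\alpha,\beta:Z\to[0,1]$ write $\alpha\sqsubseteq\beta$ if for every $\varepsilon>0$ there exists $\delta>0$ such that for all $z$, $\alpha(z)\le\delta$ implies $\beta(z)\le\varepsilon$. The category ${\rm PER}(\mathbf U)$, concretely: objects are pairs $(X,R)$ with $X$ a set and $R:X\times X\to[0,1]$ such that $R(x,y)\sqsubseteq R(y,x)$ (as functions of $(x,y)$) and $\max(R(x,y),R(y,z))\sqsubseteq R(x,z)$ (as functions of $(x,y,z)$). A functional relation $(X,R)\to(Y,S)$ is $F:X\times Y\to[0,1]$ with $F(x,y)\sqsubseteq\max(R(x,x),S(y,y))$, $\max(F(x,y),R(x,x'),S(y,y'))\sqsubseteq F(x',y')$, $\max(F(x,y),F(x,y'))\sqsubseteq S(y,y')$, and $R(x,x)\sqsubseteq\inf_{y\in Y}F(x,y)$ (each as functions of the displayed variables). Morphisms are classes $[F]$ with $F\sim F'$ iff $F\sqsubseteq F'$; composition of $[F]$ and $[H]$ is $[(x,z)\mapsto\inf_y\max(F(x,y),H(y,z))]$. *)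

(* Defs.v *)
From HB Require Import structures.
From mathcomp Require Import all_boot all_order all_algebra.
From mathcomp Require Import all_classical all_reals.
Set Implicit Arguments. Unset Strict Implicit. Unset Printing Implicit Defensive.
Import Order.TTheory GRing.Theory Num.Theory.
Local Open Scope classical_set_scope.
Local Open Scope ring_scope.

Section Defs.
Variable R : realType.

Definition is_metric1 (X : Type) (d : X -> X -> R) : Prop :=
  (forall x y, 0 <= d x y <= 1) /\
  (forall x y, d x y = 0 <-> x = y) /\
  (forall x y, d x y = d y x) /\
  (forall x y z, d x z <= d x y + d y z).

Definition cauchy_seq (X : Type) (d : X -> X -> R) (u : nat -> X) : Prop :=
  forall e : R, 0 < e -> exists N : nat, forall m n : nat,
    (N <= m)%N -> (N <= n)%N -> d (u m) (u n) < e.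

Definition converges_to (X : Type) (d : X -> X -> R) (u : nat -> X) (x : X) : Prop :=
  forall e : R, 0 < e -> exists N : nat, forall n : nat, (N <= n)%N -> d (u n) x < e.

Definition complete_metric (X : Type) (d : X -> X -> R) : Prop :=
  forall u : nat -> X, cauchy_seq d u -> exists x, converges_to d u x.

Definition cMet1 (X : Type) (d : X -> X -> R) : Prop :=
  is_metric1 d /\ complete_metric d.

Definition prod_metric (X Y : Type) (dX : X -> X -> R) (dY : Y -> Y -> R)
  (p q : X * Y) : R := Num.max (dX p.1 q.1) (dY p.2 q.2).

Definition unit_metric (_ _ : unit) : R := 0.

Definition sqle (Z : Type) (alpha beta : Z -> R) : Prop :=
  forall e : R, 0 < e -> exists2 delta : R, 0 < delta &
    forall z, alpha z <= delta -> beta z <= e.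

(* infimum in the complete lattice [0,1] (inf of the empty family is 1) *)
Definition inf01 (Y : Type) (f : Y -> R) : R := inf (range f `|` [set 1]).

Definition valued01 (X Y : Type) (F : X -> Y -> R) : Prop :=
  forall x y, 0 <= F x y <= 1.

Definition is_per (X : Type) (Rx : X -> X -> R) : Prop :=
  valued01 Rx /\
  sqle (fun p : X * X => Rx p.1 p.2) (fun p : X * X => Rx p.2 p.1) /\
  sqle (fun t : X * X * X => Num.max (Rx t.1.1 t.1.2) (Rx t.1.2 t.2))
       (fun t : X * X * X => Rx t.1.1 t.2).

Definition is_funrel (X Y : Type) (Rx : X -> X -> R) (S : Y -> Y -> R)
    (F : X -> Y -> R) : Prop :=
  valued01 F /\
  sqle (fun p : X * Y => F p.1 p.2)
       (fun p : X * Y => Num.max (Rx p.1 p.1) (S p.2 p.2)) /\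
  sqle (fun t : X * Y * X * Y =>
          Num.max (F t.1.1.1 t.1.1.2) (Num.max (Rx t.1.1.1 t.1.2) (S t.1.1.2 t.2)))
       (fun t : X * Y * X * Y => F t.1.2 t.2) /\
  sqle (fun t : X * Y * Y => Num.max (F t.1.1 t.1.2) (F t.1.1 t.2))
       (fun t : X * Y * Y => S t.1.2 t.2) /\
  sqle (fun x : X => Rx x x) (fun x : X => inf01 (fun y : Y => F x y)).

(* equality of morphisms: F ~ F' iff F ⊑ F' *)
Definition frel_equiv (X Y : Type) (F F' : X -> Y -> R) : Prop :=
  sqle (fun p : X * Y => F p.1 p.2) (fun p : X * Y => F' p.1 p.2).

Definition frel_comp (X Y Z : Type) (F : X -> Y -> R) (H : Y -> Z -> R)
    (x : X) (z : Z) : R :=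
  inf01 (fun y : Y => Num.max (F x y) (H y z)).

Definition G_map (X Y : Type) (dY : Y -> Y -> R) (f : X -> Y) (x : X) (y : Y) : R :=
  dY (f x) y.

Definition is_product_PER (P X Y : Type) (Rp : P -> P -> R)
    (Rx : X -> X -> R) (Ry : Y -> Y -> R)
    (p1 : P -> X -> R) (p2 : P -> Y -> R) : Prop :=
  is_per Rp /\ is_funrel Rp Rx p1 /\ is_funrel Rp Ry p2 /\
  forall (Z : Type) (Rz : Z -> Z -> R), is_per Rz ->
  forall (F1 : Z -> X -> R) (F2 : Z -> Y -> R),
    is_funrel Rz Rx F1 -> is_funrel Rz Ry F2 ->
    (exists H : Z -> P -> R, is_funrel Rz Rp H /\
        frel_equiv (frel_comp H p1) F1 /\ frel_equiv (frel_comp H p2) F2) /\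
    (forall H H' : Z -> P -> R, is_funrel Rz Rp H -> is_funrel Rz Rp H' ->
        frel_equiv (frel_comp H p1) F1 -> frel_equiv (frel_comp H p2) F2 ->
        frel_equiv (frel_comp H' p1) F1 -> frel_equiv (frel_comp H' p2) F2 ->
        frel_equiv H H').

Definition is_terminal_PER (T : Type) (Rt : T -> T -> R) : Prop :=
  is_per Rt /\
  forall (Z : Type) (Rz : Z -> Z -> R), is_per Rz ->
    (exists F : Z -> T -> R, is_funrel Rz Rt F) /\
    (forall F F' : Z -> T -> R, is_funrel Rz Rt F -> is_funrel Rz Rt F' ->
       frel_equiv F F').

End Defs.

(* Main.v *)
Require Import Defs.
From mathcomp Require Import all_boot all_order all_algebra.
From mathcomp Require Import all_classical all_reals.
From mathcomp Require Import lra.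
Set Implicit Arguments. Unset Strict Implicit. Unset Printing Implicit Defensive.
Import Order.TTheory GRing.Theory Num.Theory.
Local Open Scope classical_set_scope.
Local Open Scope ring_scope.

Section Lemmas.
Variable R : realType.
Implicit Types e d : R.

Lemma inf01_le (Y : Type) (f : Y -> R) y : (forall y, 0 <= f y) -> inf01 f <= f y.
Proof.
move=> f0; rewrite /inf01; apply: ge_inf; last by left; exists y.
exists 0 => x [[y' _ <-]|->] //.
Qed.

Lemma inf01_le1 (Y : Type) (f : Y -> R) : (forall y, 0 <= f y) -> inf01 f <= 1.
Proof.
move=> f0; rewrite /inf01; apply: ge_inf; last by right.
exists 0 => x [[y' _ <-]|->] //.
Qed.

Lemma inf01_lt (Y : Type) (f : Y -> R) e : inf01 f < e -> e <= 1 ->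
  exists y, f y < e.
Proof.
move=> /inf_lt [] ; first by exists 1; right.
move=> x [[y _ <-]|->] ; first by move=> h _; exists y.
by move=> h1 h2; have := lt_le_trans h1 h2; rewrite ltxx.
Qed.

Lemma sqle_le (Z : Type) (a b : Z -> R) k : 0 < k ->
  (forall z, b z <= k * a z) -> sqle a b.
Proof.
move=> k0 h e e0; exists (e / k); first by rewrite divr_gt0.
move=> z hz; apply: (le_trans (h z)).
by rewrite -ler_pdivlMl // mulrC.
Qed.

Lemma sqle_trans (Z : Type) (a b c : Z -> R) : sqle a b -> sqle b c -> sqle a c.
Proof.
move=> ab bc e e0; have [d d0 hd] := bc e e0; have [d' d'0 hd'] := ab d d0.
by exists d' => // z /hd' /hd.
Qed.

Lemma sqle_max (Z : Type) (a b c : Z -> R) :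
  sqle a b -> sqle a c -> sqle a (fun z => Num.max (b z) (c z)).
Proof.
move=> ab ac e e0; have [d d0 hd] := ab e e0; have [d' d'0 hd'] := ac e e0.
exists (Num.min d d'); first by rewrite lt_min d0.
by move=> z; rewrite le_min => /andP[/hd h1 /hd' h2]; rewrite ge_max h1 h2.
Qed.

Lemma sqle_comp (Z W : Type) (g : W -> Z) (a b : Z -> R) :
  sqle a b -> sqle (fun w => a (g w)) (fun w => b (g w)).
Proof. by move=> ab e e0; have [d d0 hd] := ab e e0; exists d => // w /hd. Qed.


Lemma sqle_le1 (Z : Type) (a b : Z -> R) : (forall z, b z <= a z) -> sqle a b.
Proof. by move=> h; apply: (@sqle_le _ _ _ 1) => // z; rewrite mul1r. Qed.

Lemma inf01_ge (Y : Type) (f : Y -> R) c : (forall y, c <= f y) -> c <= 1 ->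
  c <= inf01 f.
Proof.
move=> h c1; apply: lb_le_inf; first by exists 1; right.
by move=> x [[y _ <-]|->].
Qed.

Lemma per_symm (X : Type) (Rx : X -> X -> R) : is_per Rx ->
  sqle (fun t : X * X * X => Num.max (Rx t.1.1 t.1.2) (Rx t.1.2 t.1.1))
       (fun t : X * X * X => Rx t.1.2 t.1.2).
Proof.
move=> [v [sy tr]].
apply: (sqle_trans (b := fun t : X * X * X => Num.max (Rx t.1.2 t.1.1) (Rx t.1.1 t.1.2))).
  apply: sqle_max; last by apply: sqle_le1 => t; rewrite le_max lexx.
  apply: (sqle_trans (b := fun t : X * X * X => Rx t.1.1 t.1.2)).
    by apply: sqle_le1 => t; rewrite le_max lexx.
  exact: (sqle_comp (fun t : X * X * X => (t.1.1, t.1.2)) sy).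
exact: (sqle_comp (fun t : X * X * X => (t.1.2, t.1.1, t.1.2)) tr).
Qed.

Lemma terminal_part : is_terminal_PER (@unit_metric R).
Proof.
split.
  split; first by move=> x y; rewrite /unit_metric lexx ler01.
  by split; apply: sqle_le1 => t /=; rewrite /unit_metric ?maxxx.
move=> Z Rz Rzp; have [v [sy tr]] := Rzp; split.
  exists (fun z _ => Rz z z); split; first by move=> x y; exact: v.
  have v0 : forall x y, 0 <= Rz x y by move=> x y; case/andP: (v x y).
  split.
    by apply: sqle_le1 => p /=; rewrite /unit_metric ge_max lexx v0.
  split.
    apply: (sqle_trans (b := fun t : Z * unit * Z * unit =>
       Num.max (Rz t.1.1.1 t.1.2) (Rz t.1.2 t.1.1.1))).
      apply: sqle_max.
        by apply: sqle_le1 => t /=; rewrite /unit_metric !le_max lexx orbT.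
      apply: (sqle_trans (b := fun t : Z * unit * Z * unit => Rz t.1.1.1 t.1.2)).
        by apply: sqle_le1 => t /=; rewrite /unit_metric !le_max lexx orbT.
      exact: (sqle_comp (fun t : Z * unit * Z * unit => (t.1.1.1, t.1.2)) sy).
    exact: (sqle_comp (fun t : Z * unit * Z * unit => (t.1.1.1, t.1.2, t.1.2))
             (per_symm Rzp)).
  split.
    by apply: sqle_le1 => t /=; rewrite /unit_metric le_max v0.
  by apply: sqle_le1 => z; apply: (@inf01_le _ _ tt) => y; exact: v0.
move=> F F' [vF [c2 _]] [vF' [_ [_ [_ c5']]]].
rewrite /frel_equiv; apply: (sqle_trans c2).
apply: (sqle_trans (b := fun p : Z * unit => Rz p.1 p.1)).
  by apply: sqle_le1 => p; rewrite /unit_metric le_max lexx.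
apply: (sqle_trans (b := fun p : Z * unit => inf01 (fun y => F' p.1 y))).
  exact: (sqle_comp (fun p : Z * unit => p.1) c5').
apply: sqle_le1 => -[z u] /=; case: u; apply: inf01_ge; first by case.
by case/andP: (vF' z tt).
Qed.


Lemma met0 (X : Type) (d : X -> X -> R) : is_metric1 d -> forall x y, 0 <= d x y.
Proof. by move=> [v _] x y; case/andP: (v x y). Qed.
Lemma met1 (X : Type) (d : X -> X -> R) : is_metric1 d -> forall x y, d x y <= 1.
Proof. by move=> [v _] x y; case/andP: (v x y). Qed.
Lemma metxx (X : Type) (d : X -> X -> R) : is_metric1 d -> forall x, d x x = 0.
Proof. by move=> [_ [z _]] x; apply/z. Qed.
Lemma metC (X : Type) (d : X -> X -> R) : is_metric1 d -> forall x y, d x y = d y x.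
Proof. by move=> [_ [_ [s _]]]. Qed.
Lemma metT (X : Type) (d : X -> X -> R) : is_metric1 d ->
  forall x y z, d x z <= d x y + d y z.
Proof. by move=> [_ [_ [_ t]]]. Qed.

Lemma prod_metric1 (X Y : Type) (dX : X -> X -> R) (dY : Y -> Y -> R) :
  is_metric1 dX -> is_metric1 dY -> is_metric1 (prod_metric dX dY).
Proof.
move=> mX mY; rewrite /prod_metric; split.
  by move=> p q; rewrite le_max ge_max !met0 ?met1.
split.
  move=> [x y] [x' y'] /=; split; last by case=> -> ->; rewrite (metxx mX) (metxx mY) maxxx.
  move=> h.
  have h1 : dX x x' = 0.
    by apply/eqP; rewrite eq_le met0 // andbT -h le_max lexx.
  have h2 : dY y y' = 0.
    by apply/eqP; rewrite eq_le met0 // andbT -h le_max lexx orbT.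
  by have [_ [zX _]] := mX; have [_ [zY _]] := mY; rewrite ((zX _ _).1 h1) ((zY _ _).1 h2).
split; first by move=> p q; rewrite (metC mX) (metC mY).
move=> p q r; rewrite ge_max; apply/andP; split.
  apply: (le_trans (metT mX _ q.1 _)); apply: lerD; by rewrite le_max lexx.
apply: (le_trans (metT mY _ q.2 _)); apply: lerD; by rewrite le_max lexx orbT.
Qed.

Lemma metric_per (X : Type) (d : X -> X -> R) : is_metric1 d -> is_per d.
Proof.
move=> m; split; first by move=> x y; rewrite met0 ?met1.
split; first by apply: sqle_le1 => p; rewrite (metC m).
apply: (@sqle_le _ _ _ 2) => // t.
apply: (le_trans (metT m _ t.1.2 _)).
rewrite mulr2n mulrDl mul1r; apply: lerD; by rewrite le_max lexx ?orbT.
Qed.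

Lemma map_funrel (P X : Type) (dP : P -> P -> R) (dX : X -> X -> R) (f : P -> X) :
  is_metric1 dP -> is_metric1 dX -> (forall p q, dX (f p) (f q) <= dP p q) ->
  is_funrel dP dX (G_map dX f).
Proof.
move=> mP mX nf; rewrite /G_map; split; first by move=> p x; rewrite met0 ?met1.
split; first by apply: sqle_le1 => p /=; rewrite (metxx mP) (metxx mX) maxxx met0.
split.
  apply: (@sqle_le _ _ _ 3) => // t /=.
  apply: (le_trans (metT mX _ (f t.1.1.1) _)).
  apply: (le_trans (lerD (lexx _) (metT mX _ t.1.1.2 _))).
  rewrite -(natr1 2) mulrDl mul1r mulr2n mulrDl mul1r -addrA.
  apply: lerD; last apply: lerD.
  - apply: (le_trans (nf _ _)); rewrite (metC mP).
    by rewrite !le_max lexx ?orbT.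
  - by rewrite !le_max lexx ?orbT.
  - by rewrite !le_max lexx ?orbT.
split.
  apply: (@sqle_le _ _ _ 2) => // t /=.
  apply: (le_trans (metT mX _ (f t.1.1) _)).
  rewrite mulr2n mulrDl mul1r (metC mX); apply: lerD; by rewrite le_max lexx ?orbT.
apply: sqle_le1 => p; apply: (le_trans (@inf01_le _ _ (f p) _)).
  by move=> x; rewrite met0.
by rewrite !metxx.
Qed.


Ltac mx := rewrite /prod_metric /= ?ge_max ?le_max ?lexx /= ?orbT ?andbT.

Section Pair.
Variables (Z X Y : Type) (Rz : Z -> Z -> R) (dX : X -> X -> R) (dY : Y -> Y -> R).
Variables (F1 : Z -> X -> R) (F2 : Z -> Y -> R).
Hypotheses (Rzp : is_per Rz) (mX : is_metric1 dX) (mY : is_metric1 dY).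
Hypotheses (fr1 : is_funrel Rz dX F1) (fr2 : is_funrel Rz dY F2).

Definition Hp (z : Z) (p : X * Y) : R := Num.max (F1 z p.1) (F2 z p.2).

Lemma pair_funrel : is_funrel Rz (prod_metric dX dY) Hp.
Proof.
have [v1 [a1 [b1 [c1 d1]]]] := fr1; have [v2 [a2 [b2 [c2 d2]]]] := fr2.
rewrite /Hp; split.
  move=> z p; have /andP[l1 u1] := v1 z p.1; have /andP[l2 u2] := v2 z p.2.
  by rewrite le_max ge_max l1 u1 u2.
split.
  apply: (sqle_trans (b := fun p : Z * (X * Y) => F1 p.1 p.2.1)).
    by apply: sqle_le1 => p /=; mx.
  apply: (sqle_trans (sqle_comp (fun p : Z * (X * Y) => (p.1, p.2.1)) a1)).
  by apply: sqle_le1 => p /=; rewrite /prod_metric (metxx mX) (metxx mY) maxxx.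
split.
  apply: (sqle_max (b := fun t : Z * (X * Y) * Z * (X * Y) => F1 t.1.2 t.2.1)
                   (c := fun t : Z * (X * Y) * Z * (X * Y) => F2 t.1.2 t.2.2)).
    apply: (sqle_trans _ (sqle_comp
       (fun t : Z * (X * Y) * Z * (X * Y) => (t.1.1.1, t.1.1.2.1, t.1.2, t.2.1)) b1)).
    by apply: sqle_le1 => t /=; mx.
  apply: (sqle_trans _ (sqle_comp
     (fun t : Z * (X * Y) * Z * (X * Y) => (t.1.1.1, t.1.1.2.2, t.1.2, t.2.2)) b2)).
  by apply: sqle_le1 => t /=; mx.
split.
  rewrite /prod_metric.
  apply: (sqle_max (b := fun t : Z * (X * Y) * (X * Y) => dX t.1.2.1 t.2.1)
                   (c := fun t : Z * (X * Y) * (X * Y) => dY t.1.2.2 t.2.2)).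
    apply: (sqle_trans _ (sqle_comp
       (fun t : Z * (X * Y) * (X * Y) => (t.1.1, t.1.2.1, t.2.1)) c1)).
    by apply: sqle_le1 => t /=; mx.
  apply: (sqle_trans _ (sqle_comp
     (fun t : Z * (X * Y) * (X * Y) => (t.1.1, t.1.2.2, t.2.2)) c2)).
  by apply: sqle_le1 => t /=; mx.
move=> e e0.
pose m := Num.min e 1.
have m0 : 0 < m by rewrite lt_min e0 ltr01.
have m1 : m <= 1 by rewrite ge_min lexx orbT.
have me : m <= e by rewrite ge_min lexx.
have m20 : 0 < m / 2 by rewrite divr_gt0.
have [e1 e10 he1] := d1 _ m20; have [e2 e20 he2] := d2 _ m20.
exists (Num.min e1 e2); first by rewrite lt_min e10.
move=> z; rewrite le_min => /andP[h1 h2].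
have [x hx] : exists x, F1 z x < m.
  by apply: inf01_lt m1; apply: (le_lt_trans (he1 _ h1)); lra.
have [y hy] : exists y, F2 z y < m.
  by apply: inf01_lt m1; apply: (le_lt_trans (he2 _ h2)); lra.
apply: (le_trans (@inf01_le _ _ (x, y) _)).
  move=> p; have /andP[l1 _] := v1 z p.1; by rewrite le_max l1.
by apply: (le_trans _ me); rewrite ge_max /= (ltW hx) (ltW hy).
Qed.

End Pair.


Lemma comp_equiv (Z X P : Type) (Rz : Z -> Z -> R) (dX : X -> X -> R)
   (F1 : Z -> X -> R) (G : Z -> P -> R) (f : P -> X) :
  is_funrel Rz dX F1 -> (forall z p, F1 z (f p) <= G z p) ->
  frel_equiv (frel_comp G (G_map dX f)) F1.
Proof.
move=> [v1 [a1 [b1 _]]] hG; rewrite /frel_equiv /frel_comp /G_map => e e0.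
have [d3 d30 hd3] := b1 e e0.
have [d2 d20 hd2] := a1 d3 d30.
pose m := Num.min (Num.min d2 d3) 1.
have m0 : 0 < m by rewrite !lt_min d20 d30 ltr01.
have m1 : m <= 1 by rewrite ge_min lexx orbT.
have md2 : m <= d2 by rewrite !ge_min lexx.
have md3 : m <= d3 by rewrite !ge_min lexx orbT.
exists (m / 2); first by rewrite divr_gt0.
move=> [z x] /= h.
have [p hp] : exists p, Num.max (G z p) (dX (f p) x) < m.
  by apply: inf01_lt m1; apply: (le_lt_trans h); lra.
move: hp; rewrite gt_max => /andP[hp1 hp2].
have hF : F1 z (f p) <= d2 by apply: (le_trans (hG _ _)); apply: ltW; exact: lt_le_trans hp1 md2.
have := hd2 (z, f p) hF; rewrite /= ge_max => /andP[hR _].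
apply: (hd3 (z, f p, z, x)); rewrite /= !ge_max hR.
rewrite (le_trans (hG _ _)) ?(ltW (lt_le_trans hp1 md3)) //.
by rewrite (ltW (lt_le_trans hp2 md3)).
Qed.


Lemma pair_unique (Z X Y : Type) (Rz : Z -> Z -> R) (dX : X -> X -> R)
  (dY : Y -> Y -> R) (F1 : Z -> X -> R) (F2 : Z -> Y -> R)
  (H H' : Z -> X * Y -> R) :
  is_metric1 dX -> is_metric1 dY ->
  is_funrel Rz dX F1 -> is_funrel Rz dY F2 ->
  is_funrel Rz (prod_metric dX dY) H -> is_funrel Rz (prod_metric dX dY) H' ->
  frel_equiv (frel_comp H (G_map dX (@fst X Y))) F1 ->
  frel_equiv (frel_comp H (G_map dY (@snd X Y))) F2 ->
  frel_equiv (frel_comp H' (G_map dX (@fst X Y))) F1 ->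
  frel_equiv (frel_comp H' (G_map dY (@snd X Y))) F2 ->
  frel_equiv H H'.
Proof.
move=> mX mY [_ [_ [_ [c1 _]]]] [_ [_ [_ [c2 _]]]] [vH [a2H _]]
  [vH' [_ [b3' [_ d5']]]] e1 e2 e1' e2' e e0.
have [a3 a30 ha3] := b3' e e0.
have [a4 a40 ha4] := c1 a3 a30.
have [b4 b40 hb4] := c2 a3 a30.
have [k1 k10 hk1] := e1' a4 a40.
have [k2 k20 hk2] := e2' b4 b40.
pose m := Num.min (Num.min (Num.min a3 k1) k2) 1.
have m0 : 0 < m by rewrite !lt_min a30 k10 k20 ltr01.
have m1 : m <= 1 by rewrite ge_min lexx orbT.
have ma3 : m <= a3 by rewrite !ge_min lexx.
have mk1 : m <= k1 by rewrite !ge_min lexx !orbT.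
have mk2 : m <= k2 by rewrite !ge_min lexx !orbT.
have m20 : 0 < m / 2 by rewrite divr_gt0.
have [d5 d50 hd5] := d5' _ m20.
have [j1 j10 hj1] := e1 a4 a40.
have [j2 j20 hj2] := e2 b4 b40.
have md : 0 < Num.min d5 a3 by rewrite lt_min d50 a30.
have [d2 d20 hd2] := a2H _ md.
exists (Num.min (Num.min d2 j1) j2); first by rewrite !lt_min d20 j10 j20.
move=> [z p] /=; rewrite !le_min => /andP[/andP[hp2 hpj1] hpj2].
have := hd2 (z, p) hp2; rewrite /= ge_max le_min => /andP[/andP[hR5 hR3] _].
have [q hq] : exists q, H' z q < m.
  by apply: inf01_lt m1; apply: (le_lt_trans (hd5 z hR5)); lra.
have nn (G : Z -> X * Y -> R) (d : X -> X -> R) (w : Z) (x : X) :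
   valued01 G -> is_metric1 d -> forall y, 0 <= Num.max (G w y) (d y.1 x).
  by move=> vG md' y; have /andP[l _] := vG w y; rewrite le_max l.
have nn2 (G : Z -> X * Y -> R) (d : Y -> Y -> R) (w : Z) (x : Y) :
   valued01 G -> is_metric1 d -> forall y, 0 <= Num.max (G w y) (d y.2 x).
  by move=> vG md' y; have /andP[l _] := vG w y; rewrite le_max l.
have q1 : F1 z q.1 <= a4.
  apply: (hk1 (z, q.1)); rewrite /frel_comp /G_map /=.
  apply: (le_trans (@inf01_le _ _ q (nn _ _ _ _ vH' mX))).
  by rewrite /= (metxx mX) ge_max (ltW (lt_le_trans hq mk1)) ltW.
have q2 : F2 z q.2 <= b4.
  apply: (hk2 (z, q.2)); rewrite /frel_comp /G_map /=.
  apply: (le_trans (@inf01_le _ _ q (nn2 _ _ _ _ vH' mY))).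
  by rewrite /= (metxx mY) ge_max (ltW (lt_le_trans hq mk2)) ltW.
have p1 : F1 z p.1 <= a4.
  apply: (hj1 (z, p.1)); rewrite /frel_comp /G_map /=.
  apply: (le_trans (@inf01_le _ _ p (nn _ _ _ _ vH mX))).
  by rewrite /= (metxx mX) ge_max hpj1 ltW.
have p2 : F2 z p.2 <= b4.
  apply: (hj2 (z, p.2)); rewrite /frel_comp /G_map /=.
  apply: (le_trans (@inf01_le _ _ p (nn2 _ _ _ _ vH mY))).
  by rewrite /= (metxx mY) ge_max hpj2 ltW.
have hx := ha4 (z, q.1, p.1); rewrite /= ge_max q1 p1 in hx.
have hy := hb4 (z, q.2, p.2); rewrite /= ge_max q2 p2 in hy.
apply: (ha3 (z, q, z, p)); rewrite /= /prod_metric !ge_max hR3.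
by rewrite (ltW (lt_le_trans hq ma3)) hx // hy.
Qed.

End Lemmas.

Theorem mainTheorem17 (R : realType) :
  (* G preserves the terminal object *)
  is_terminal_PER (@unit_metric R) /\
  (* G preserves binary products *)
  (forall (X Y : Type) (dX : X -> X -> R) (dY : Y -> Y -> R),
     cMet1 dX -> cMet1 dY ->
     is_product_PER (prod_metric dX dY) dX dY
       (G_map dX (@fst X Y)) (G_map dY (@snd X Y))).
Proof.
split; first exact: terminal_part.
move=> X Y dX dY [mX _] [mY _].
have mP := prod_metric1 mX mY.
split; first exact: metric_per mP.
split.
  by apply: map_funrel => // p q; rewrite /prod_metric le_max lexx.
split.
  by apply: map_funrel => // p q; rewrite /prod_metric le_max lexx orbT.
move=> Z Rz Rzp F1 F2 f1 f2; split.
  exists (Hp F1 F2); split; first exact: pair_funrel.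
  split.
    by apply: (comp_equiv f1) => z p; rewrite /Hp le_max lexx.
  by apply: (comp_equiv f2) => z p; rewrite /Hp le_max lexx orbT.
move=> H H' h h' e1 e2 e1' e2'.
exact: (pair_unique mX mY f1 f2 h h' e1 e2 e1' e2').
Qed.
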